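(* Consider the oceanic model with threshold $h$ under the Shapley scheme. Let $\Pi$ be a partition of all players into winning pools such that every atomic player $i$ is in a pool whose other members are non-atomic players of total mass $k_i$ with $0<k_i\le h$ and $a_i+k_i\ge h$, all remaining non-atomic players are in pools containing no atomic player, each of total mass exactly $l\ge h$ (at least one such pool), and for all distinct atomic players $i,j$: \[\frac{h-a_i}{k_i^2}=\frac{1}{l},\qquad \frac{k_i+a_i-h}{k_i}\ge\frac{a_i}{l},\qquad \frac{k_i+a_i-h}{k_i}\ge\frac{(h-a_j)^2-(\max(0,h-a_i-a_j))^2+(\max(0,a_i-h+k_j))^2}{2k_j^2}.\] Then the Shapley scheme is Sybil-proof with respect to $\Pi$: no atomic player can obtain a strictly larger total payoff by a Sybil strategy than her payoff under $\Pi$.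
   Context: Oceanic model: finitely many atomic players, player $i$ with stake $a_i>0$, and a continuum of non-atomic players (a measurable set of them contributes stake equal to its measure); threshold $h>0$ with $a_i<h$ for all atomic $i$. Pools partition all players; a pool $S$ has stake $m(S)$ (non-atomic mass plus atomic stakes) and reward $\rho(S)=1$ if $m(S)\ge h$ (winning), else $0$. Shapley scheme (oceanic): in a pool $S$ with non-atomic mass $k>0$ and atomic members with stakes $b_1,\dots,b_t$, let $L_1,\dots,L_t$ be i.i.d. uniform on $[0,k]$ and $P(i)=\{j\ne i: L_j<L_i\}$; atomic member $i$ receives $\Pr\big[\sum_{j\in P(i)}b_j+L_i<h\le\sum_{j\in P(i)}b_j+L_i+b_i\big]$; the remainder is shared equally per unit of stake among non-atomic members. Sybil strategy: given a partition $\Pi$, an atomic player $i$ with stake $a_i$ splits her stake into nonnegative amounts $s_{1},\dots,s_{t}$ with $\sum_j s_j=a_i$ and joins $t$ distinct pools among those of $\Pi$ (her own original pool being taken without her), contributing $s_j$ to the $j$-th of them as a separate atomic identity of stake $s_j$; all other players stay put. Her payoff is the sum of the payments her identities receive in these pools. A scheme is Sybil-proof with respect to $\Pi$ if no atomic player becomes strictly better off (relative to her payoff under $\Pi$) by switching to a Sybil strategy. *)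

(* Defs.v *)
From HB Require Import structures.
From mathcomp Require Import all_boot all_order all_algebra.
From mathcomp Require Import all_classical all_reals all_analysis.
Set Implicit Arguments. Unset Strict Implicit. Unset Printing Implicit Defensive.
Import Order.TTheory GRing.Theory Num.Theory.
Import numFieldNormedType.Exports.
Local Open Scope classical_set_scope.
Local Open Scope ring_scope.

Section Oceanic.
Variable R : realType.

(* Iterated Lebesgue integral of g over the box [0,k]^t, the coordinates
   being L 0, ..., L (t-1) (coordinates >= t are fixed to 0). *)
Fixpoint box_integral (k : R) (t : nat) (g : (nat -> R) -> \bar R) : \bar R :=
  match t with
  | 0 => g (fun _ => 0)
  | t'.+1 =>
      let I : set R := `[0%R, k]%classic in
      (\int[@lebesgue_measure R]_(x in I)
          box_integral k t' (fun L => g (fun j => if j == t' then x else L j)))%E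
  end.

(* Probability, for L_0,...,L_(t-1) i.i.d. uniform on [0,k], of the event E:
   (1/k^t) * integral over [0,k]^t of the indicator of E. *)
Definition unif_prob (k : R) (t : nat) (E : (nat -> R) -> bool) : R :=
  fine (box_integral k t (fun L => ((E L)%:R)%:E)) / k ^+ t.

Definition pool_stake (k : R) (bs : seq R) : R := k + \sum_(b <- bs) b.

(* Shapley payment to the atomic member number i (stake bs`_i) of a pool with
   non-atomic mass k and atomic members of stakes bs, threshold h.
   P(i) = {j <> i : L_j < L_i}; the payment is
   Pr[ sum_{P(i)} b_j + L_i < h <= sum_{P(i)} b_j + L_i + b_i ]
   if the pool is winning (reward 1), and 0 otherwise (reward 0). *)
Definition shapley_pay (h k : R) (bs : seq R) (i : nat) : R :=
  if h <= pool_stake k bs then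
    unif_prob k (size bs) (fun L =>
      let pre := \sum_(j < size bs | (j != i :> nat) && (L j < L i)) bs`_j in
      (pre + L i < h) && (h <= pre + L i + bs`_i))
  else 0.

(* The partition Pi of the theorem: pools are indexed by 'I_n + 'I_m;
   pool inl j = atomic player j together with non-atomic mass k j,
   pool inr q = a pool of non-atomic players only, of mass l. *)
Definition payoff_Pi (h : R) (n : nat) (a k : 'I_n -> R) (i : 'I_n) : R :=
  shapley_pay h (k i) [:: a i] 0.

(* Sybil strategy of player i: she joins the (distinct) pools in J (pools of Pi,
   her own pool taken without her), contributing stake s p to pool p \in J as
   a separate atomic identity; everybody else stays put. *)
Definition sybil_payoff (h l : R) (n m : nat) (a k : 'I_n -> R) (i : 'I_n)
    (J : {set 'I_n + 'I_m}) (s : 'I_n + 'I_m -> R) : R :=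
  \sum_(p in J)
    match p with
    | inl j => if j == i then shapley_pay h (k i) [:: s p] 0
               else shapley_pay h (k j) [:: a j; s p] 1
    | inr _ => shapley_pay h l [:: s p] 0
    end.

End Oceanic.

(* Main.v *)
Require Import Defs.
From HB Require Import structures.
From mathcomp Require Import all_boot all_order all_algebra.
From mathcomp Require Import all_classical all_reals all_analysis.
From mathcomp Require Import ring lra.
Import Order.TTheory GRing.Theory Num.Theory.
Local Open Scope ring_scope.

Section Helpers.
Import numFieldNormedType.Exports.
Local Open Scope classical_set_scope.
Local Open Scope ring_scope.
Variable R : realType.
Local Notation mu := (@lebesgue_measure R).

Lemma le_int_patch (D1 D2 : set R) (f g : R -> \bar R) :
  (forall x, (0 <= (f \_ D1) x)%E) -> (forall x, ((f \_ D1) x <= (g \_ D2) x)%E) ->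
  (\int[mu]_(x in D1) f x <= \int[mu]_(x in D2) g x)%E.
Proof.
move=> f0 fg.
have g0 : forall x, (0 <= (g \_ D2) x)%E by move=> x; exact: le_trans (f0 x) (fg x).
rewrite integral_mkcond [X in (_ <= X)%E]integral_mkcond.
rewrite ge0_integralE; last by move=> x _; exact: f0.
rewrite [X in (_ <= X)%E]ge0_integralE; last by move=> x _; exact: g0.
rewrite !patch_setT.
apply: ereal_sup_le => _ [h hf <-]; exists h => //= x.
exact: le_trans (hf x) (fg x).
Qed.

Lemma fine_le_bound (e : \bar R) (M : R) : (0 <= e)%E -> (e <= M%:E)%E -> fine e <= M.
Proof. by case: e => [r| |] //=; rewrite ?lee_fin // leey_eq. Qed.

Lemma fine_ge_bound (e : \bar R) (r M : R) : (r%:E <= e)%E -> (e <= M%:E)%E -> r <= fine e.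
Proof. by case: e => [x| |] //=; rewrite ?lee_fin // leNye. Qed.

End Helpers.


Section Helpers.
Import numFieldNormedType.Exports.
Local Open Scope classical_set_scope.
Local Open Scope ring_scope.
Variable R : realType.
Local Notation mu := (@lebesgue_measure R).

Lemma int_lin (c d al be : R) : al <= be ->
  (\int[mu]_(x in `[al, be]) (c * x + d)%:E = (c * (be ^+ 2 - al ^+ 2) / 2 + d * (be - al))%:E)%E.
Proof.
rewrite le_eqVlt => /predU1P[<-|ab].
  by rewrite set_itv1 integral_set1 !subrr !mulr0 !mul0r addr0.
pose P : {poly R} := (c / 2) *: 'X^2 + d *: 'X.
have PE x : P.[x] = c * x ^+ 2 / 2 + d * x.
  by rewrite /P !hornerE /=; lra.
have PD x : (P^`()).[x] = c * x + d.
  rewrite /P derivD !derivZ derivX derivXn /= !hornerE /=.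
  lra.
rewrite (@continuous_FTC2 R (fun x => c * x + d) (horner P) al be ab).
- by rewrite !PE -EFinB; congr (_%:E); lra.
- have -> : (fun x => c * x + d) = horner (c *: 'X + d%:P).
    by apply/funext => x; rewrite !hornerE.
  by apply: continuous_subspaceT => x; apply: continuous_horner.
- split.
  + by move=> x _; exact: derivable_horner.
  + by apply: cvg_at_right_filter; apply: continuous_horner.
  + by apply: cvg_at_left_filter; apply: continuous_horner.
- by move=> x _; rewrite -derivE PD.
Qed.

Lemma int_one (al be : R) : al <= be ->
  (\int[mu]_(x in `[al, be]) (1%:E) = (be - al)%:E)%E.
Proof.
move=> ab; transitivity (\int[mu]_(x in `[al, be]) ((0 * x + 1)%:E))%E.
  by apply: eq_integral => x _; rewrite mul0r add0r.
by rewrite int_lin //; congr (_%:E); lra.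
Qed.
End Helpers.


Section Helpers.
Import numFieldNormedType.Exports.
Local Open Scope classical_set_scope.
Local Open Scope ring_scope.
Variable R : realType.
Local Notation mu := (@lebesgue_measure R).

Lemma pay1_le (h K s al be : R) : 0 < K -> al <= be ->
  (forall x, 0 <= x <= K -> x < h -> h <= x + s -> al <= x <= be) ->
  shapley_pay h K [:: s] 0 <= (be - al) / K.
Proof.
move=> K0 ab H.
rewrite /shapley_pay /unif_prob /=.
case: ifP => _; last by apply: divr_ge0; lra.
rewrite expr1; apply: ler_wpM2r; first by rewrite invr_ge0 ltW.
apply: fine_le_bound.
  apply: integral_ge0 => x _; rewrite lee_fin; case: (_ && _) => //.
rewrite -int_one //.
apply: le_int_patch => x; rewrite !patchE !big_mkcond !big_ord1 /= !add0r.
  case: ifP => // _; rewrite lee_fin; case: (_ && _) => //.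
rewrite !mem_setE !in_itv /=.
have p0 : (point : \bar R) = 0%E by [].
rewrite p0; case: ifP => xK; last by case: ifP.
case: (boolP (x < h <= x + s)) => [/andP[xh hs]|_]; last by case: ifP.
by rewrite (H x xK xh hs).
Qed.
End Helpers.
Section More.
Import numFieldNormedType.Exports.
Local Open Scope classical_set_scope.
Local Open Scope ring_scope.
Variable R : realType.
Local Notation mu := (@lebesgue_measure R).
Lemma int_one_co (al be : R) : al <= be ->
  (\int[mu]_(x in `[al, be[) (1%:E) = (be - al)%:E)%E.
Proof.
move=> ab.
rewrite integral_cst // mul1e.
have := lebesgue_measure_itv `[al, be[; rewrite /= lte_fin.
move=> ->; case: ifP => [_|]; first by rewrite EFinB.
move=> /negbT; rewrite -leNgt => ba.
have -> : be = al by apply/le_anti; rewrite ab ba.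
by rewrite subrr.
Qed.

Lemma pay1_ge (h K a : R) : 0 < K -> K <= h -> 0 < a -> a < h -> h <= a + K ->
  (K + a - h) / K <= shapley_pay h K [:: a] 0.
Proof.
move=> K0 Kh a0 ah haK.
rewrite /shapley_pay /unif_prob /pool_stake /= big_seq1 ifT; last by lra.
rewrite expr1; apply: ler_wpM2r; first by rewrite invr_ge0 ltW.
apply: (@fine_ge_bound _ _ _ K).
- have -> : K + a - h = K - (h - a) by ring.
  rewrite -int_one_co; last by lra.
  apply: le_int_patch => x; rewrite !patchE !mem_setE !in_itv /=.
    by case: ifP.
  rewrite !big_mkcond !big_ord1 /= !add0r.
  have p0 : (point : \bar R) = 0%E by [].
  rewrite p0; case: ifP => [/andP[x1 x2]|_]; last by case: ifP => // _; case: (_ && _).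
  rewrite ifT; last by apply/andP; split; lra.
  by rewrite (_ : (x < h <= x + a) = true) //; apply/andP; split; lra.
- have -> : K = K - 0 by ring.
  rewrite -int_one; last by lra.
  apply: le_int_patch => x; rewrite !patchE !mem_setE !in_itv /=.
    by case: ifP => // _; case: (_ && _).
  rewrite subr0; case: ifP => // _; by case: (_ && _).
Qed.
End More.


Section P2.
Import numFieldNormedType.Exports.
Local Open Scope classical_set_scope.
Local Open Scope ring_scope.
Variable R : realType.
Local Notation mu := (@lebesgue_measure R).

Lemma int_ev_le (K al be : R) (E : R -> bool) : al <= be ->
  (forall y, 0 <= y <= K -> E y -> al <= y <= be) ->
  (\int[mu]_(y in `[0%R, K]%classic) ((E y)%:R)%:E <= (be - al)%:E)%E.
Proof.
move=> ab H; rewrite -int_one //.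
apply: le_int_patch => x; rewrite !patchE !mem_setE !in_itv /=.
  by case: ifP => // _; case: (E x).
have p0 : (point : \bar R) = 0%E by [].
rewrite p0; case: ifP => xK; last by case: ifP.
case: (boolP (E x)) => [Ex|_]; last by case: ifP.
by rewrite (H x xK Ex).
Qed.

Lemma pay2_le (h K b s : R) : 0 < K -> K <= h -> 0 < b -> b < h -> h <= b + K ->
  0 <= s -> s < h ->
  shapley_pay h K [:: b; s] 1 <=
  ((h - b) ^+ 2 - (Num.max 0 (h - s - b)) ^+ 2 + (Num.max 0 (s - h + K)) ^+ 2) / (2 * K ^+ 2).
Proof.
move=> K0 Kh b0 bh hbK s0 sh.
rewrite /shapley_pay /unif_prob /pool_stake /=.
under eq_integral do under eq_integral do rewrite !big_mkcond !big_ord_recl !big_ord0 /=.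
set M1 := Num.max 0 (h - s - b).
set M2 := Num.max 0 (s - h + K).
set V := (_ ^+ 2 - _ + _).
have m1a : 0 <= M1 by rewrite le_max lexx.
have m1b : h - s - b <= M1 by rewrite le_max lexx orbT.
have m1c : M1 <= h - b by rewrite ge_max; apply/andP; split; lra.
have m2a : 0 <= M2 by rewrite le_max lexx.
have m2b : s - h + K <= M2 by rewrite le_max lexx orbT.
have V0 : 0 <= V.
  rewrite /V; have : M1 ^+ 2 <= (h - b) ^+ 2 by rewrite ler_sqr ?nnegrE //; lra.
  by have := sqr_ge0 M2; lra.
case: ifP => _; last by apply: divr_ge0 => //; rewrite mulr_ge0 // exprn_ge0 // ltW.
have -> : V / (2 * K ^+ 2) = (V / 2) / K ^+ 2 by rewrite invfM !mulrA.
apply: ler_wpM2r; first by rewrite invr_ge0 exprn_ge0 // ltW.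
apply: fine_le_bound.
  apply: integral_ge0 => x _; apply: integral_ge0 => y _.
  by rewrite lee_fin; case: (_ && _).
pose SA : set R := `[h - b - s, h - b[%classic.
pose SB : set R := `[h - s, h[%classic.
pose G1 := fun x : R => x * \1_SA x.
pose G2 := fun x : R => (K - x) * \1_SB x.
apply: (@le_trans _ _ (\int[mu]_(x in `[0%R, K]%classic) ((G1 x)%:E + (G2 x)%:E))%E).
  have p0 : (point : \bar R) = 0%E by [].
  apply: le_int_patch => x; rewrite !patchE.
    by case: ifP => // _; apply: integral_ge0 => y _; rewrite lee_fin; case: (_ && _).
  rewrite !mem_setE !in_itv /=.
  case: ifP => [/andP[x0 xK]|_]; last by [].
  rewrite /G1 /G2 !indicE !mem_setE !in_itv /=.
  have [hA|hA] := boolP ((h - b - s <= x) && (x < h - b));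
  have [hB|hB] := boolP ((h - s <= x) && (x < h)).
  - apply: le_trans ((@int_ev_le K 0 K _ _ _)) _; first lra.
      by move=> y /andP[y0 yK] _; rewrite y0 yK.
    by rewrite /= ?mulr1 ?mulr0 -EFinD lee_fin; lra.
  - apply: le_trans ((@int_ev_le K 0 x _ _ _)) _; first lra.
      move=> y /andP[y0 yK]; case: ifP => yx /andP[e1 e2].
        by rewrite y0 ltW.
      exfalso; move/negP: hB; apply; apply/andP; split; lra.
    by rewrite /= ?mulr1 ?mulr0 -EFinD lee_fin; lra.
  - apply: le_trans ((@int_ev_le K x K _ _ _)) _; first lra.
      move=> y /andP[y0 yK]; case: ifP => yx /andP[e1 e2].
        exfalso; move/negP: hA; apply; apply/andP; split; lra.
      by rewrite yK andbT leNgt yx.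
    by rewrite /= ?mulr1 ?mulr0 -EFinD lee_fin; lra.
  - apply: le_trans ((@int_ev_le K x x _ _ _)) _; first lra.
      move=> y /andP[y0 yK]; case: ifP => yx /andP[e1 e2].
        exfalso; move/negP: hA; apply; apply/andP; split; lra.
      exfalso; move/negP: hB; apply; apply/andP; split; lra.
    by rewrite /= ?mulr1 ?mulr0 -EFinD lee_fin; lra.
have mI : measurable (`[0%R, K]%classic : set R) by exact: measurable_itv.
rewrite ge0_integralD //; last 4 first.
- move=> x; rewrite /= in_itv /= => /andP[x0 xK]; rewrite lee_fin /G1.
  by apply: mulr_ge0 => //; rewrite indicE; case: (_ \in _).
- apply/measurable_realfun.measurable_EFinP; apply: measurable_realfun.measurable_funM; first exact: measurable_id.
  by apply: measurable_realfun.measurable_indic; exact: measurable_itv.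
- move=> x; rewrite /= in_itv /= => /andP[x0 xK]; rewrite lee_fin /G2.
  by apply: mulr_ge0; [lra|rewrite indicE; case: (_ \in _)].
- apply/measurable_realfun.measurable_EFinP; apply: measurable_realfun.measurable_funM.
    by apply: measurable_realfun.measurable_funB; [exact: measurable_cst|exact: measurable_id].
  by apply: measurable_realfun.measurable_indic; exact: measurable_itv.
have p0 : (point : \bar R) = 0%E by [].
have I1 : (\int[mu]_(x in `[0%R, K]%classic) (G1 x)%:E <=
    (1 * ((h - b) ^+ 2 - M1 ^+ 2) / 2 + 0 * ((h - b) - M1))%:E)%E.
  rewrite -int_lin //.
  apply: le_int_patch => x; rewrite !patchE p0 !mem_setE !in_itv /=.
    case: ifP => // /andP[x0 xK]; rewrite lee_fin /G1.
    by apply: mulr_ge0 => //; rewrite indicE; case: (_ \in _).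
  rewrite /G1 indicE mem_setE in_itv /=.
  case: ifP => [/andP[x0 xK]|_].
    case: (boolP ((h - b - s <= x) && (x < h - b))) => [/andP[x1 x2]|_].
      rewrite ifT; last by apply/andP; split; [rewrite ge_max; apply/andP; split|]; lra.
      by rewrite /= mulr1 lee_fin; lra.
    by rewrite /= mulr0; case: ifP => // /andP[y1 y2]; rewrite lee_fin; lra.
  by case: ifP => // /andP[y1 y2]; rewrite lee_fin; lra.
have I2 : (\int[mu]_(x in `[0%R, K]%classic) (G2 x)%:E <=
    (-1 * (K ^+ 2 - (K - M2) ^+ 2) / 2 + K * (K - (K - M2)))%:E)%E.
  rewrite -int_lin; last lra.
  apply: le_int_patch => x; rewrite !patchE p0 !mem_setE !in_itv /=.
    case: ifP => // /andP[x0 xK]; rewrite lee_fin /G2.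
    by apply: mulr_ge0; [lra|rewrite indicE; case: (_ \in _)].
  rewrite /G2 indicE mem_setE in_itv /=.
  case: ifP => [/andP[x0 xK]|_].
    case: (boolP ((h - s <= x) && (x < h))) => [/andP[x1 x2]|_].
      rewrite ifT; last by apply/andP; split; lra.
      by rewrite /= mulr1 lee_fin; lra.
    by rewrite /= mulr0; case: ifP => // /andP[y1 y2]; rewrite lee_fin; lra.
  by case: ifP => // /andP[y1 y2]; rewrite lee_fin; lra.
apply: le_trans (leeD I1 I2) _.
rewrite -EFinD lee_fin /V; lra.
Qed.
End P2.


Section Key.
Import numFieldNormedType.Exports.
Local Open Scope classical_set_scope.
Local Open Scope ring_scope.
Variable R : realFieldType.

Lemma maxP0 (z : R) : (Num.max 0 z = 0 /\ z <= 0) \/ (Num.max 0 z = z /\ 0 <= z).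
Proof.
have [hz|hz] : z <= 0 \/ 0 < z by case: (leP z 0); [left|right].
  by left; split => //; rewrite max_l.
by right; split; [rewrite max_r //; exact: ltW | exact: ltW].
Qed.

Lemma keyF (u v C x a : R) : 0 <= u -> 0 <= v -> 2 * u <= C -> 0 <= x -> x <= a ->
  u ^+ 2 - Num.max 0 (u - a) ^+ 2 + Num.max 0 (a - v) ^+ 2 <= C * a ->
  u ^+ 2 - Num.max 0 (u - x) ^+ 2 + Num.max 0 (x - v) ^+ 2 <= C * x.
Proof.
move=> u0 v0 uC x0 xa Ha.
have low : forall y, 0 <= y -> (y <= u \/ y <= v) ->
    u ^+ 2 - Num.max 0 (u - y) ^+ 2 + Num.max 0 (y - v) ^+ 2 <= C * y.
  move=> y y0 hy.
  have : 2 * u * y <= C * y by apply: ler_wpM2r.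
  case: (maxP0 (u - y)) => [[-> h1]|[-> h1]]; case: (maxP0 (y - v)) => [[-> h2]|[-> h2]];
    case: hy => hy; nra.
have [xl|xh] : (x <= u \/ x <= v) \/ (u <= x /\ v <= x).
  by case: (leP x u) => ?; [left; left | case: (leP x v) => ?; [left; right| right; split; apply: ltW]].
  exact: low.
case: xh => ux vx.
have e1 : Num.max 0 (u - x) = 0 by rewrite max_l //; lra.
have e2 : Num.max 0 (x - v) = x - v by rewrite max_r //; lra.
have e3 : Num.max 0 (u - a) = 0 by rewrite max_l //; lra.
have e4 : Num.max 0 (a - v) = a - v by rewrite max_r //; lra.
rewrite e1 e2; rewrite e3 e4 in Ha.
pose w := Num.max u v.
have wu : u <= w by rewrite le_max lexx.
have wv : v <= w by rewrite le_max lexx orbT.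
have wx : w <= x by rewrite ge_max ux vx.
have Fw : u ^+ 2 + (w - v) ^+ 2 <= C * w.
  have : 2 * u * w <= C * w by apply: ler_wpM2r => //; lra.
  case: (leP v u) => vu.
    have -> : w = u by rewrite /w max_l.
    nra.
  have -> : w = v by rewrite /w max_r //; exact: ltW.
  nra.
have [aw|aw] := eqVneq a w.
  have -> : x = w by lra.
  nra.
have aw' : 0 < a - w by rewrite subr_gt0 lt_neqAle eq_sym aw /=; lra.
have p1 : (a - x) * (u ^+ 2 + (w - v) ^+ 2) <= (a - x) * (C * w) by apply: ler_wpM2l; lra.
have p2 : (x - w) * (u ^+ 2 + (a - v) ^+ 2) <= (x - w) * (C * a) by apply: ler_wpM2l; lra.
have p3 : 0 <= (a - x) * (x - w) * (a - w) by apply: mulr_ge0; [apply: mulr_ge0|]; lra.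
have : (a - w) * (u ^+ 2 - 0 ^+ 2 + (x - v) ^+ 2) <= (a - w) * (C * x) by nra.
by rewrite ler_pM2l.
Qed.

Lemma other_bound (h b K c x a0 : R) : 0 < K -> K <= h -> 0 < b -> b < h -> h <= b + K ->
  (h - b) / K ^+ 2 <= c -> 0 <= x -> x <= a0 ->
  ((h - b) ^+ 2 - Num.max 0 (h - a0 - b) ^+ 2 + Num.max 0 (a0 - h + K) ^+ 2) / (2 * K ^+ 2) <= c * a0 ->
  ((h - b) ^+ 2 - Num.max 0 (h - x - b) ^+ 2 + Num.max 0 (x - h + K) ^+ 2) / (2 * K ^+ 2) <= c * x.
Proof.
move=> K0 Kh b0 bh hbK hc x0 xa H.
have K2 : 0 < 2 * K ^+ 2 by rewrite mulr_gt0 // exprn_gt0.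
rewrite ler_pdivrMr //; rewrite ler_pdivrMr // in H.
rewrite ler_pdivrMr ?exprn_gt0 // in hc.
have e : forall y, h - y - b = (h - b) - y by move=> y; ring.
have e' : forall y, y - h + K = y - (h - K) by move=> y; ring.
rewrite e e' in H; rewrite e e'.
have -> : c * x * (2 * K ^+ 2) = (2 * K ^+ 2 * c) * x by ring.
apply: (@keyF _ _ _ _ a0) => //; try lra.
Qed.

Lemma own_bound (h K a x : R) : 0 < K -> K <= h -> 0 < a -> 0 <= x -> x <= a -> h <= a + K ->
  Num.max 0 (x - h + K) / K <= ((K + a - h) / K / a) * x.
Proof.
move=> K0 Kh a0 x0 xa haK.
have -> : (K + a - h) / K / a * x = ((K + a - h) * x / a) / K.
  have Kn : K != 0 by rewrite gt_eqF.
  have an : a != 0 by rewrite gt_eqF.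
  by field; rewrite Kn an.
apply: ler_wpM2r; first by rewrite invr_ge0 ltW.
case: (maxP0 (x - h + K)) => [[-> _]|[-> h1]].
  by apply: divr_ge0; [apply: mulr_ge0; lra | lra].
rewrite ler_pdivlMr //; nra.
Qed.
End Key.

Theorem theorem5p1 (R : realType) (n m : nat) (h l : R) (a k : 'I_n -> R)
  (h_pos : 0 < h)
  (a_pos : forall i, 0 < a i) (a_lt_h : forall i, a i < h)
  (k_pos : forall i, 0 < k i) (k_le_h : forall i, k i <= h)
  (ak_win : forall i, h <= a i + k i)
  (l_ge_h : h <= l) (m_pos : (0 < m)%N)
  (cond1 : forall i, (h - a i) / (k i ^+ 2) = 1 / l)
  (cond2 : forall i, a i / l <= (k i + a i - h) / k i)
  (cond3 : forall i j, i != j ->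
     ((h - a j) ^+ 2 - (Num.max 0 (h - a i - a j)) ^+ 2
        + (Num.max 0 (a i - h + k j)) ^+ 2) / (2 * k j ^+ 2)
       <= (k i + a i - h) / k i) :
  forall (i : 'I_n) (J : {set 'I_n + 'I_m}) (s : 'I_n + 'I_m -> R),
    (forall p, p \in J -> 0 <= s p) ->
    \sum_(p in J) s p = a i ->
    sybil_payoff h l a k i J s <= payoff_Pi h a k i.
Proof.
move=> i J s s0 ssum.
set P := (k i + a i - h) / k i.
have PP : P <= payoff_Pi h a k i.
  by apply: pay1_ge; [exact: k_pos | exact: k_le_h | exact: a_pos | exact: a_lt_h | exact: ak_win].
set c := P / a i.
have ai0 : 0 < a i := a_pos i.
have ca : c * a i = P by rewrite /c divfK // gt_eqF.
have l0 : 0 < l by lra.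
have cl : 1 / l <= c.
  rewrite /c ler_pdivlMr // mul1r mulrC; exact: cond2.
have c0 : 0 <= c by apply: le_trans cl; rewrite mul1r invr_ge0 ltW.
have sle : forall p, p \in J -> s p <= a i.
  move=> p pJ; rewrite -ssum (bigD1 p) //= lerDl.
  by apply: sumr_ge0 => q /andP[qJ _]; exact: s0.
apply: le_trans PP.
rewrite -ca -ssum mulr_sumr /sybil_payoff.
apply: ler_sum => p pJ.
have sp0 := s0 p pJ.
have spa := sle p pJ.
case: p pJ sp0 spa => [j|q] pJ sp0 spa.
- case: (eqVneq j i) => [eji|ji].
    subst j.
  + apply: le_trans (@pay1_le R h (k i) (s (inl i)) (k i - Num.max 0 (s (inl i) - h + k i)) (k i) _ _ _) _.
    * exact: k_pos.
    * by rewrite lerBlDr lerDl le_max lexx.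
    * move=> x /andP[x0 xK] xh hx; rewrite xK andbT lerBlDr.
      have : s (inl i) - h + k i <= Num.max 0 (s (inl i) - h + k i) by rewrite le_max lexx orbT.
      lra.
    * rewrite opprB addrC subrK.
      apply: own_bound; [exact: k_pos| exact: k_le_h| exact: ai0| exact: sp0| exact: spa| exact: ak_win].
  + apply: le_trans (@pay2_le R h (k j) (a j) (s (inl j)) _ _ _ _ _ _ _) _.
    * exact: k_pos.
    * exact: k_le_h.
    * exact: a_pos.
    * exact: a_lt_h.
    * exact: ak_win.
    * exact: sp0.
    * by apply: le_lt_trans spa _; exact: a_lt_h.
    apply: (@other_bound _ h (a j) (k j) c (s (inl j)) (a i)).
    * exact: k_pos.
    * exact: k_le_h.
    * exact: a_pos.
    * exact: a_lt_h.
    * exact: ak_win.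
    * by rewrite cond1.
    * exact: sp0.
    * exact: spa.
    * by rewrite ca; apply: cond3; rewrite eq_sym.
- apply: le_trans (@pay1_le R h l (s (inr q)) (h - s (inr q)) h _ _ _) _.
  + exact: l0.
  + lra.
  + move=> x _ xh hx; apply/andP; split; lra.
  + rewrite opprB addrC subrK mulrC.
    by apply: ler_wpM2r => //; move: cl; rewrite mul1r.
Qed.
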